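(* Let $\tau$ be a $*$-stopping time. Then $\tau\wedge T\in L_G^{1^*}(\Omega)$ for each given $T>0$, and $\tau\in\mathcal{L}_G^{1^*_*}(\Omega)$.
   Context: $\Omega=C_0^d(\mathbb{R}^+)$ is the space of continuous paths $\omega:[0,\infty)\to\mathbb{R}^d$ with $\omega_0=0$, $B$ the canonical process, $\mathcal F_t=\sigma\{B_s:s\le t\}$, $\hat{\mathbb{E}}$ the $G$-expectation ($G$ a monotone sublinear function on $d\times d$ symmetric matrices). $L^1_G(\Omega)$ (resp. $L^1_G(\Omega_t)$) is the completion of bounded Lipschitz cylinder functions $\varphi(B_{t_1},\dots,B_{t_n})$ (resp. with $t_i\le t$) under $\hat{\mathbb{E}}[|\cdot|]$. $\mathcal{P}$ is a weakly compact set of probability measures representing $\hat{\mathbb{E}}$, $\hat{\mathbb{E}}[X]=\sup_{P\in\mathcal{P}}E_P[X]$ for Borel $X$, $c(A)=\sup_{P\in\mathcal{P}}P(A)$, q.s. = outside a capacity-zero set. $L^0(\Omega)$ (resp. $L^0(\Omega_t)$) are $\mathcal B(\Omega)$- (resp. $\mathcal F_t$-)measurable maps into $[-\infty,\infty]$; $\mathbb{L}^1(\cdot)$ those with $\hat{\mathbb{E}}[|X|]<\infty$. $L_G^{1^*}(\Omega)=\{X\in\mathbb{L}^1(\Omega):\exists X_n\in L^1_G(\Omega),X_n\downarrow X\text{ q.s.}\}$, $L_G^{1^*}(\Omega_t)=\{X\in\mathbb{L}^1(\Omega_t):\exists X_n\in L^1_G(\Omega_t),X_n\downarrow X\text{ q.s.}\}$;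 $\mathcal{L}_G^{1^*_*}(\Omega)=\{X\in L^0(\Omega):\exists X_n\in L_G^{1^*}(\Omega),X_n\uparrow X\text{ q.s.}\}$. A random time $\tau:\Omega\to[0,\infty)$ is a $*$-stopping time if $I_{\{\tau\ge t\}}\in L_G^{1^*}(\Omega_t)$ for each $t\ge0$. *)

(* Defs.v *)
From HB Require Import structures.
From mathcomp Require Import all_boot all_order all_algebra.
From mathcomp Require Import all_classical all_reals all_analysis.
From mathcomp Require Import measurable_realfun.
Import Order.TTheory GRing.Theory Num.Theory numFieldNormedType.Exports.

Set Implicit Arguments.
Unset Strict Implicit.
Unset Printing Implicit Defensive.

Local Open Scope classical_set_scope.
Local Open Scope ring_scope.

(* The path space Omega = C_0^d(R^+).  A path on [0,oo) with w_0 = 0 is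
   represented by its (unique) continuous extension to R which vanishes on
   (-oo,0]; coordinates are indexed by 'I_d.                            *)
Record path (R : realType) (d : nat) := Path {
  pth :> R -> 'I_d -> R;
  pth_neg : forall t, t <= 0 -> forall i, pth t i = 0;
  pth_cont : forall i, continuous (fun t : R => pth t i : R) }.

Definition zero_path R d : path R d.
Proof. by exists (fun _ _ => 0) => // i; exact: cst_continuous. Defined.

HB.instance Definition _ R d := gen_eqMixin (path R d).
HB.instance Definition _ R d := gen_choiceMixin (path R d).
HB.instance Definition _ R d := isPointed.Build (path R d) (zero_path R d).

Section GFramework.
Variables (R : realType) (d : nat).

Definition gen_upto (t : R) : set (set (path R d)) :=
  [set E | exists (s : R) (i : 'I_d) (A : set R),
     0 <= s /\ s <= t /\ measurable A /\ E = (fun w : path R d => pth w s i) @^-1` A].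

Definition gen_all : set (set (path R d)) :=
  [set E | exists (s : R) (i : 'I_d) (A : set R),
     0 <= s /\ measurable A /\ E = (fun w : path R d => pth w s i) @^-1` A].

Local Notation Omega := (g_sigma_algebraType gen_all).

Definition Ft (t : R) : set (set Omega) := <<s gen_upto t >>.

Definition B (t : R) (w : Omega) : 'I_d -> R := pth w t.

Definition cylv n (ts : 'I_n -> R) (w : Omega) : 'M[R]_(n, d) :=
  \matrix_(k < n, i < d) B (ts k) w i.

Definition l1 m n (x : 'M[R]_(m, n)) : R := \sum_(k < m) \sum_(i < n) `|x k i|.

Definition bLip m n (phi : 'M[R]_(m, n) -> R) :=
  (exists M, forall x, `|phi x| <= M) /\
  (exists C, forall x y, `|phi x - phi y| <= C * l1 (x - y)).

Definition clLip m n (phi : 'M[R]_(m, n) -> R) :=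
  exists (C : R) (p : nat), forall x y,
    `|phi x - phi y| <= C * (1 + l1 x ^+ p + l1 y ^+ p) * l1 (x - y).

Definition cylB_upto (t : R) (X : Omega -> R) :=
  exists n (ts : 'I_n -> R) (phi : 'M[R]_(n, d) -> R),
    (forall k, 0 <= ts k <= t) /\ bLip phi /\ X = phi \o cylv ts.

Definition cylB (X : Omega -> R) :=
  exists n (ts : 'I_n -> R) (phi : 'M[R]_(n, d) -> R),
    (forall k, 0 <= ts k) /\ bLip phi /\ X = phi \o cylv ts.

Definition Lip_cyl (X : Omega -> R) :=
  exists n (ts : 'I_n -> R) (phi : 'M[R]_(n, d) -> R),
    (forall k, 0 <= ts k) /\ clLip phi /\ X = phi \o cylv ts.

Definition rowB (t : R) (w : Omega) : 'M[R]_(1, d) := \row_i B t w i.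
Definition incr (t s : R) (w : Omega) : 'M[R]_(1, d) :=
  \row_i (B (t + s) w i - B t w i).

Definition psd (A : 'M[R]_d) := forall v : 'I_d -> R,
  0 <= \sum_(i < d) \sum_(j < d) v i * A i j * v j.

Definition monotone_sublinear (G : 'M[R]_d -> R) :=
  (forall A C, A^T = A -> C^T = C -> psd (A - C) -> G C <= G A) /\
  (forall A C, A^T = A -> C^T = C -> G (A + C) <= G A + G C) /\
  (forall (l : R) A, A^T = A -> 0 <= l -> G (l *: A) = l * G A).

(* E is the G-expectation on L_ip(Omega): a sublinear expectation under which
   the canonical process is a G-Brownian motion with generator G. *)
Definition is_G_expectation (G : 'M[R]_d -> R) (E : (Omega -> R) -> R) :=
  (forall X Y, Lip_cyl X -> Lip_cyl Y -> (forall w, X w <= Y w) -> E X <= E Y) /\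
  (forall c : R, E (fun _ => c) = c) /\
  (forall X Y, Lip_cyl X -> Lip_cyl Y -> E (X \+ Y) <= E X + E Y) /\
  (forall X (l : R), Lip_cyl X -> 0 <= l -> E (fun w => l * X w) = l * E X) /\
  (forall (t s : R) (phi : 'M[R]_(1, d) -> R), 0 <= t -> 0 <= s -> clLip phi ->
     E (phi \o incr t s) = E (phi \o rowB s)) /\
  (forall (t s : R) n (ts : 'I_n -> R) (phi : 'M[R]_(n + 1, d) -> R),
     0 <= t -> 0 <= s -> (forall k, 0 <= ts k <= t) -> clLip phi ->
     E (fun w => phi (col_mx (cylv ts w) (incr t s w))) =
     E (fun w => E (fun w' => phi (col_mx (cylv ts w) (incr t s w'))))) /\
  (forall (t : R) (a : 'I_d -> R), 0 <= t ->
     E (fun w => \sum_(i < d) a i * B t w i) = 0 /\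
     E (fun w => - \sum_(i < d) a i * B t w i) = 0) /\
  (forall e : R, 0 < e -> exists2 delta : R, 0 < delta &
     forall t : R, 0 < t < delta ->
       `| E (fun w => Num.sqrt (\sum_(i < d) B t w i ^+ 2) ^+ 3) / t | < e) /\
  (forall A : 'M[R]_d, A^T = A ->
     G A = 2^-1 * E (fun w => \sum_(i < d) \sum_(j < d) A i j * B 1 w i * B 1 w j)).

Definition loc_unif_cvg (wn : nat -> Omega) (w : Omega) :=
  forall (N e : R), 0 < e -> exists K : nat, forall k, (K <= k)%N ->
    forall t, 0 <= t <= N -> forall i, `|B t (wn k) i - B t w i| < e.

(* continuity for the topology of locally uniform convergence
   (metrizable, so sequential continuity is continuity) *)
Definition bcontinuous (f : Omega -> R) :=
  (exists M, forall w, `|f w| <= M) /\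
  (forall wn w, loc_unif_cvg wn w -> f \o wn @ \oo --> f w).

Definition weakly_compact (PP : set (probability Omega R)) :=
  forall Pn : nat -> probability Omega R, (forall n, PP (Pn n)) ->
    exists (phi : nat -> nat) (P : probability Omega R),
      (forall k, (phi k < phi k.+1)%N) /\ PP P /\
      forall f, bcontinuous f ->
        (fun k => (\int[Pn (phi k)]_w (f w)%:E)%E) @ \oo --> (\int[P]_w (f w)%:E)%E.

Definition represents (PP : set (probability Omega R)) (E : (Omega -> R) -> R) :=
  forall X, cylB X -> ereal_sup [set (\int[P]_w (X w)%:E)%E | P in PP] = (E X)%:E.

Variable PP : set (probability Omega R).

Definition hatE (X : Omega -> \bar R) : \bar R :=
  ereal_sup [set (\int[P]_w X w)%E | P in PP].

Definition cap (A : set Omega) : \bar R := ereal_sup [set P A | P in PP].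

Definition qs (Q : Omega -> Prop) :=
  exists N : set Omega, measurable N /\ cap N = 0%E /\ forall w, ~ N w -> Q w.

(* L^1_G(Omega) and L^1_G(Omega_t) (Borel representatives of the completion) *)
Definition L1G (X : Omega -> \bar R) :=
  measurable_fun setT X /\
  exists Xn : nat -> Omega -> R, (forall n, cylB (Xn n)) /\
    (fun n => hatE (fun w => `|X w - (Xn n w)%:E|)%E) @ \oo --> 0%E.

Definition L1G_t (t : R) (X : Omega -> \bar R) :=
  measurable_fun setT X /\
  exists Xn : nat -> Omega -> R, (forall n, cylB_upto t (Xn n)) /\
    (fun n => hatE (fun w => `|X w - (Xn n w)%:E|)%E) @ \oo --> 0%E.

Definition Ft_measurable (t : R) (X : Omega -> \bar R) :=
  forall A : set \bar R, measurable A -> Ft t (X @^-1` A).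

Definition bL1 (X : Omega -> \bar R) :=
  measurable_fun setT X /\ (hatE (fun w => `|X w|)%E < +oo)%E.

Definition bL1_t (t : R) (X : Omega -> \bar R) :=
  Ft_measurable t X /\ (hatE (fun w => `|X w|)%E < +oo)%E.

Definition decr_to (Xn : nat -> Omega -> \bar R) (X : Omega -> \bar R) (w : Omega) :=
  (forall n, (Xn n.+1 w <= Xn n w)%E) /\ (fun n => Xn n w) @ \oo --> X w.
Definition incr_to (Xn : nat -> Omega -> \bar R) (X : Omega -> \bar R) (w : Omega) :=
  (forall n, (Xn n w <= Xn n.+1 w)%E) /\ (fun n => Xn n w) @ \oo --> X w.

Definition L1Gstar (X : Omega -> \bar R) :=
  bL1 X /\ exists Xn, (forall n, L1G (Xn n)) /\ qs (decr_to Xn X).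

Definition L1Gstar_t (t : R) (X : Omega -> \bar R) :=
  bL1_t t X /\ exists Xn, (forall n, L1G_t t (Xn n)) /\ qs (decr_to Xn X).

Definition L1Gstarstar (X : Omega -> \bar R) :=
  measurable_fun setT X /\
  exists Xn, (forall n, L1Gstar (Xn n)) /\ qs (incr_to Xn X).

Definition star_stopping_time (tau : Omega -> R) :=
  (forall w, 0 <= tau w) /\
  forall t : R, 0 <= t ->
    L1Gstar_t t (fun w => (if t <= tau w then 1 else 0)%:E).

End GFramework.

Notation Omega R d := (g_sigma_algebraType (@gen_all R d)).

(* Main.v *)
Require Import Defs.
From HB Require Import structures.
From mathcomp Require Import all_boot all_order all_algebra.
From mathcomp Require Import all_classical all_reals all_analysis.
From mathcomp Require Import measurable_realfun.
From mathcomp Require Import lra.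
Import Order.TTheory GRing.Theory Num.Theory numFieldNormedType.Exports.
Local Open Scope classical_set_scope.
Local Open Scope ring_scope.
From mathcomp Require Import lra.
Set Implicit Arguments. Unset Strict Implicit. Unset Printing Implicit Defensive.
Section T. Variable R : realType.
Lemma min_lip (a b c e : R) : `|Num.min a b - Num.min c e| <= `|a - c| + `|b - e|.
Proof.
have [hab|hab] := leP a b; have [hce|hce] := leP c e;
rewrite ?ler_norml ?ler_normr; 
have := ler_norm (a - c); have := ler_norm (b - e); have := ler_norm (c - a); have := ler_norm (e - b);
rewrite (distrC c a) (distrC e b); lra.
Qed.
Definition clampR (x : R) : R := Num.min (Num.max x 0) 1.
Lemma max_lip (a b : R) : `|Num.max a 0 - Num.max b 0| <= `|a - b|.
Proof.
have [ha|ha] := leP a 0; have [hb|hb] := leP b 0;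
rewrite ?ler_norml; have := ler_norm (a - b); have := ler_norm (b - a); rewrite (distrC b a); lra.
Qed.
Lemma min1_lip (a b : R) : `|Num.min a 1 - Num.min b 1| <= `|a - b|.
Proof.
have [ha|ha] := leP a 1; have [hb|hb] := leP b 1;
rewrite ?ler_norml; have := ler_norm (a - b); have := ler_norm (b - a); rewrite (distrC b a); lra.
Qed.
Lemma clampR_lip (a b : R) : `|clampR a - clampR b| <= `|a - b|.
Proof. exact: le_trans (min1_lip _ _) (max_lip _ _). Qed.

Local Open Scope ereal_scope.
Definition clampE (x : \bar R) : R := fine (Order.min (Order.max x 0) 1).
Lemma clampE_EFin r : clampE r%:E = clampR r.
Proof. by rewrite /clampE /clampR -EFin_max -EFin_min. Qed.
Lemma clampE_y : clampE +oo = 1%R.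
Proof. by rewrite /clampE maxC maxey minC miney. Qed.
Lemma clampE_Ny : clampE -oo = 0%R.
Proof. by rewrite /clampE maxNye min_l. Qed.
Lemma clampEE x : (clampE x)%:E = Order.min (Order.max x 0) 1.
Proof.
case: x => [r||]; last 2 first.
- by rewrite clampE_y maxC maxey minC miney.
- by rewrite clampE_Ny maxNye min_l.
by rewrite /clampE -EFin_max -EFin_min.
Qed.
Local Close Scope ereal_scope.
Lemma clampR_def r : clampR r = if r <= 0 then 0 else if r <= 1 then r else 1.
Proof.
rewrite /clampR; have [h|h] := leP r 0; first by rewrite min_l.
by have [h'|h'] := leP r 1.
Qed.
Lemma clampR_ge0 r : 0 <= clampR r.
Proof. by rewrite clampR_def; have [h|h] := leP r 0; [|have [h'|h'] := leP r 1]; lra. Qed.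
Lemma clampR_le1 r : clampR r <= 1.
Proof. by rewrite clampR_def; have [h|h] := leP r 0; [|have [h'|h'] := leP r 1]; lra. Qed.
Lemma clampR_le r : 0 <= r -> clampR r <= r.
Proof. by rewrite clampR_def; have [h|h] := leP r 0; [|have [h'|h'] := leP r 1]; lra. Qed.
Lemma clampR_id r : 0 <= r <= 1 -> clampR r = r.
Proof. by move=> /andP[h0 h1]; rewrite /clampR max_l // min_l. Qed.
Lemma clampR_mono r s : r <= s -> clampR r <= clampR s.
Proof.
rewrite !clampR_def => rs; have [h|h] := leP r 0; have [h'|h'] := leP s 0;
rewrite ?clampR_def; try have [h2|h2] := leP r 1; try have [h3|h3] := leP s 1; lra.
Qed.
Lemma clampE_mono (x y : \bar R) : (x <= y)%E -> clampE x <= clampE y.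
Proof.
case: x => [r||]; case: y => [s||] //=; rewrite ?clampE_EFin ?clampE_y ?clampE_Ny ?lee_fin.
- exact: clampR_mono.
- by rewrite clampR_le1.
- by rewrite clampR_ge0.
- by rewrite ler01.
Qed.

Lemma clamp_bound (c : R) (x : \bar R) (r : R) : 0 <= c ->
  (`|(c * clampE x)%:E - (c * clampR r)%:E| <= c%:E * `|x - r%:E|)%E.
Proof.
move=> c0; case: x => [s||].
- rewrite clampE_EFin -EFinB -EFinM /= !lee_fin -mulrBr normrM (ger0_norm c0).
  by apply: ler_wpM2l => //; exact: clampR_lip.
- have [->|cne] := eqVneq c 0; first by rewrite !mul0r -EFinB subrr /= normr0 mul0e.
  by rewrite /= mulry gtr0_sg ?mul1e ?leey // lt_neqAle eq_sym cne c0.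
- have [->|cne] := eqVneq c 0; first by rewrite !mul0r -EFinB subrr /= normr0 mul0e.
  by rewrite /= mulry gtr0_sg ?mul1e ?leey // lt_neqAle eq_sym cne c0.
Qed.
Lemma tele (x c : R) (N : nat) : 0 <= x -> 0 <= c ->
  \sum_(0 <= k < N) Num.min c (Num.max (x - k%:R * c) 0) = Num.min x (N%:R * c).
Proof.
move=> x0 c0; elim: N => [|N IH]; first by rewrite big_nil mul0r min_r.
rewrite big_nat_recr //= IH -[N.+1]addn1 natrD mulrDl mul1r.
set a := N%:R * c.
have a0 : 0 <= a by rewrite /a mulr_ge0.
have [h1|h1] := leP x a; have [h2|h2] := leP (x - a) 0; have [h3|h3] := leP x (a + c);
  rewrite ?(min_l h1) ?(min_r (ltW h1)) ?(max_l h2) ?(max_r h2) ?(min_l h3) ?(min_r (ltW h3));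
  try lra.
all: first [rewrite min_r; lra | rewrite min_l; lra | idtac].
Qed.

Lemma S_lb (x c : R) N : 0 <= x -> 0 <= c ->
  Num.min x (N%:R * c) <= \sum_(0 <= k < N) c * (if k%:R * c <= x then 1 else 0).
Proof.
move=> x0 c0; rewrite -tele //; apply: ler_sum => k _.
case: ifP => h; rewrite ?mulr1 ?mulr0.
  by rewrite ge_min lexx.
have h' : x - k%:R * c < 0 by move/negbT: h; rewrite -ltNge; lra.
by rewrite (max_r (ltW h')) (min_r c0).
Qed.

Lemma S_ub (x c : R) N : 0 <= x -> 0 <= c ->
  \sum_(0 <= k < N.+1) c * (if k%:R * c <= x then 1 else 0) <= Num.min x (N%:R * c) + c.
Proof.
move=> x0 c0; rewrite big_nat_recl // addrC; apply: lerD; last first.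
  by case: ifP => _; rewrite ?mulr1 ?mulr0.
rewrite -tele //; apply: ler_sum => k _.
case: ifP => h; rewrite ?mulr1 ?mulr0; last first.
  rewrite le_min c0 le_max lexx orbT //.
move: h; rewrite -[k.+1]addn1 natrD mulrDl mul1r => h.
by rewrite le_min lexx le_max; apply/orP; left; lra.
Qed.

Lemma bigmin_le_x0 n (x0 : R) (F : 'I_n -> R) : \big[Num.min/x0]_(k < n) F k <= x0.
Proof.
elim: n F => [|n IH] F; first by rewrite big_ord0.
by rewrite big_ord_recl ge_min IH orbT.
Qed.

Lemma bigmin_le n (x0 : R) (F : 'I_n -> R) k0 : \big[Num.min/x0]_(k < n) F k <= F k0.
Proof.
elim: n F k0 => [|n IH] F k0; first by case: k0.
rewrite big_ord_recl ge_min; case: (unliftP ord0 k0) => [k'|] ->.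
  by rewrite IH orbT.
by rewrite lexx.
Qed.

Lemma le_bigmin n (x0 : R) (F : 'I_n -> R) b : b <= x0 -> (forall k, b <= F k) ->
  b <= \big[Num.min/x0]_(k < n) F k.
Proof.
move=> h0 hF; elim/big_ind: _ => // x y hx hy.
by rewrite le_min hx hy.
Qed.

Lemma core (L : R) (S : nat -> R) (Z : nat -> nat -> R) :
  (forall n m, S n <= Z n m) -> (forall n m, Z n m.+1 <= Z n m) -> (forall n, L <= S n) ->
  (forall e, 0 < e -> exists n, S n <= L + e) ->
  (forall n e, 0 < e -> exists m0, forall m, (m0 <= m)%N -> Z n m <= S n + e) ->
  (forall N, \big[Num.min/Z 0%N N.+1]_(j < N.+1) Z j.+1 N.+1 <= \big[Num.min/Z 0%N N]_(j < N) Z j.+1 N) /\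
  (fun N => (\big[Num.min/Z 0%N N]_(j < N) Z j.+1 N)%:E) @ \oo --> L%:E.
Proof.
move=> SZ Zdec LS Sapp Zapp; split.
  move=> N; apply: le_bigmin.
    exact: le_trans (bigmin_le_x0 _ _) (Zdec _ _).
  move=> k; apply: le_trans (Zdec _ _).
  exact: (bigmin_le _ (fun j : 'I_N.+1 => Z j.+1 N.+1) (widen_ord (leqnSn N) k)).
apply: cvg_EFin; first exact: nearW.
apply/cvgrPdist_le => e e0.
have e20 : 0 < e / 2 by rewrite divr_gt0.
have [n hn] := Sapp _ e20.
have [m0 hm0] := Zapp n _ e20.
exists (maxn n.+1 m0) => // N /= hN.
have WL : L <= \big[Num.min/Z 0%N N]_(j < N) Z j.+1 N.
  apply: le_bigmin => [|k]; first by apply: le_trans (LS 0%N) (SZ _ _).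
  by apply: le_trans (LS _) (SZ _ _).
have WZ : \big[Num.min/Z 0%N N]_(j < N) Z j.+1 N <= Z n N.
  case: n hn hN hm0 => [|n'] hn hN hm0; first exact: bigmin_le_x0.
  have hn' : (n' < N)%N by move: hN; rewrite geq_max => /andP[] /ltnW.
  exact: (bigmin_le _ (fun j : 'I_N => Z j.+1 N) (Ordinal hn')).
have hZ := hm0 N (leq_trans (leq_maxr _ _) hN).
rewrite distrC ger0_norm ?subr_ge0 //; lra.
Qed.

Lemma clamp_seq (u : nat -> \bar R) (i : R) : (i = 0 \/ i = 1) -> (forall n, (u n.+1 <= u n)%E) ->
  u @ \oo --> i%:E ->
  [/\ forall m, i <= clampE (u m), forall m, clampE (u m.+1) <= clampE (u m) &
     forall e, 0 < e -> \forall m \near \oo, clampE (u m) <= i + e].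
Proof.
move=> hi hdec hu.
have ci : clampR i = i by apply: clampR_id; case: hi => ->; rewrite ?lexx ?ler01.
have i0 : 0 <= i by case: hi => ->; rewrite ?lexx ?ler01.
have nu : nonincreasing_seq u by apply/nonincreasing_seqP.
split.
- move=> m; rewrite -{1}ci -clampE_EFin; apply: clampE_mono.
  apply: (cvge_to_le hu); exists m => // k /= hk; exact: nu.
- by move=> m; apply: clampE_mono.
move=> e e0.
have [Hfin Hcvg] := (fine_cvgP u i).1 hu.
move/cvgrPdist_lt : Hcvg => /(_ e e0) Hd.
apply: filterS2 Hfin Hd => m hf hd.
rewrite -(fineK hf) clampE_EFin.
apply: le_trans (clampR_le _); last by rewrite addr_ge0 // ltW.
apply: clampR_mono.
have := ler_norm (fine (u m) - i); rewrite distrC; lra.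
Qed.
End T.


Section S.
Variables (R : realType) (d : nat).
Local Notation Om := (Omega R d).

Lemma mB (s : R) (i : 'I_d) : 0 <= s -> measurable_fun setT (fun w : Om => B s w i).
Proof.
move=> s0 _ A mA; rewrite setTI.
apply: sub_gen_smallest; exists s, i, A; split => //.
Qed.

Lemma l1_ge0 m n (x : 'M[R]_(m, n)) : 0 <= l1 x.
Proof. by apply: sumr_ge0 => k _; apply: sumr_ge0 => i _. Qed.

Lemma rat_approx m n (y : 'M[R]_(m, n)) (e : R) : 0 < e ->
  exists r : 'M[rat]_(m, n), l1 (y - map_mx ratr r) <= e.
Proof.
move=> e0.
pose dl := e / ((m * n).+1)%:R.
have dl0 : 0 < dl by rewrite divr_gt0.
have H k i : y k i - dl < y k i + dl by rewrite ltrD2l gtrN.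
exists (\matrix_(k, i) xchoose (rat_in_itvoo (H k i))).
apply: (@le_trans _ _ (\sum_(k < m) \sum_(i < n) dl)).
  apply: ler_sum => k _; apply: ler_sum => i _.
  rewrite !mxE.
  move: (xchooseP (rat_in_itvoo (H k i))); set q := xchoose _.
  rewrite in_itv /= => /andP[h1 h2].
  rewrite ler_norml; apply/andP; split.
    lra. lra.
rewrite (eq_bigr (fun _ => dl *+ n)); last by move=> k _; rewrite sumr_const card_ord.
rewrite sumr_const card_ord -mulrnA /dl -[_ *+ (n * m)]mulr_natr -mulrA.
apply: ler_piMr; first exact: ltW.
rewrite mulrC.
by rewrite ler_pdivrMr ?ltr0n // mul1r ler_nat mulnC.
Qed.

Lemma l1N m n (x : 'M[R]_(m, n)) : l1 (- x) = l1 x.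
Proof. by apply: eq_bigr => k _; apply: eq_bigr => i _; rewrite mxE normrN. Qed.

Lemma cylB_meas (X : Om -> R) : cylB X -> measurable_fun setT X.
Proof.
move=> [n [ts [phi [ts0 [[[M hM] [C hC]] ->]]]]].
pose K := `|C|.
pose q k : 'M[R]_(n,d) := map_mx ratr (odflt 0 (unpickle k)).
pose h k (w : Om) := phi (q k) + K * l1 (cylv ts w - q k).
have hC' x y : `|phi x - phi y| <= K * l1 (x - y).
  exact: (le_trans (hC x y) (ler_wpM2r (l1_ge0 _) (ler_norm C))).
have K0 : 0 <= K by rewrite /K normr_ge0.
have lb w : has_lbound (range (h ^~ w)).
  exists (- M); move=> _ [k _ <-]; rewrite /h.
  apply: ler_wpDr; first by apply: mulr_ge0 => //; exact: l1_ge0.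
  by rewrite lerNl; apply: le_trans (hM (q k)); rewrite -normrN ler_norm.
have mh k : measurable_fun setT (h k).
  apply: measurable_funD; first exact: measurable_cst.
  apply: measurable_funM; first exact: measurable_cst.
  rewrite (_ : (fun w => _) = fun w => \sum_(a < n) \sum_(b < d) `|B (ts a) w b - q k a b|); last first.
    by apply/funext => w; apply: eq_bigr => a _; apply: eq_bigr => b _; rewrite !mxE.
  apply: measurable_sum => a; apply: measurable_sum => b.
  apply: measurableT_comp; first exact: normr_measurable.
  apply: measurable_funB; last exact: measurable_cst.
  by apply: mB; exact: ts0.
rewrite (_ : (phi \o cylv ts) = fun w => infs (h ^~ w) 0).
  exact: measurable_fun_infs.
apply/funext => w; rewrite /infs /=.
have SE : sdrop (h ^~ w) 0 = range (h ^~ w).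
  by apply/seteqP; split => z [k _ <-]; exists k.
rewrite SE; apply/le_anti/andP; split.
  apply: lb_le_inf; first by exists (h 0%N w), 0%N.
  move=> _ [k _ <-]; rewrite /h.
  have := hC' (cylv ts w) (q k); rewrite -lerBlDl => /(le_trans (ler_norm _)).
  done.
apply/ler_addgt0Pr => e e0.
pose dl := e / (K * 2 + 1).
have dl0 : 0 < dl by rewrite divr_gt0 // ltr_wpDl // mulr_ge0.
have hdl : (K * 2 + 1) * dl = e by rewrite /dl mulrC divfK // gt_eqF // ltr_wpDl // mulr_ge0.
have [r hr] := rat_approx (cylv ts w) dl0.
have qE : q (pickle r) = map_mx ratr r by rewrite /q pickleK.
apply: (@le_trans _ _ (h (pickle r) w)); first by apply: ge_inf => //; exists (pickle r).
rewrite /h qE.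
have := hC' (map_mx ratr r) (cylv ts w).
rewrite -[map_mx ratr r - _]opprB l1N => /(le_trans (ler_norm _)); rewrite lerBlDl => H1.
have H2 : K * l1 (cylv ts w - map_mx ratr r) <= K * dl by apply: ler_wpM2l.
nra.
Qed.

Variable PP : set (probability Om R).
Local Open Scope ereal_scope.

Lemma hatE_ub (F : Om -> \bar R) (P : probability Om R) : PP P ->
  \int[P]_w F w <= hatE PP F.
Proof. by move=> PPP; apply: ereal_sup_ubound; exists P. Qed.

Lemma hatE_ge0 (F : Om -> \bar R) : PP !=set0 -> (forall w, 0 <= F w) -> 0 <= hatE PP F.
Proof.
move=> [P PPP] F0; apply: le_trans (hatE_ub F PPP).
by apply: integral_ge0 => w _.
Qed.

Lemma hatE_le2 (F G1 G2 : Om -> \bar R) :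
  measurable_fun setT F -> measurable_fun setT G1 -> measurable_fun setT G2 ->
  (forall w, 0 <= F w) -> (forall w, 0 <= G1 w) -> (forall w, 0 <= G2 w) ->
  (forall w, F w <= G1 w + G2 w) ->
  hatE PP F <= hatE PP G1 + hatE PP G2.
Proof.
move=> mF mG1 mG2 F0 G10 G20 FG.
apply: ge_ereal_sup => _ [P PPP <-].
apply: (@le_trans _ _ (\int[P]_w (G1 w + G2 w))).
  apply: (@ge0_le_integral _ _ _ P setT measurableT F (fun w => G1 w + G2 w)).
  - by move=> w _; exact: F0.
  - exact: mF.
  - exact: emeasurable_funD.
  - by move=> w _; exact: FG.
rewrite (@ge0_integralD _ _ _ P setT measurableT G1 G2) //.
by apply: leeD; exact: hatE_ub.
Qed.

Lemma hatE_le1 (F G : Om -> \bar R) (c : R) : (0 <= c)%R ->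
  measurable_fun setT F -> measurable_fun setT G ->
  (forall w, 0 <= F w) -> (forall w, 0 <= G w) ->
  (forall w, F w <= c%:E * G w) ->
  hatE PP F <= c%:E * hatE PP G.
Proof.
move=> c0 mF mG F0 G0 FG.
apply: ge_ereal_sup => _ [P PPP <-].
apply: (@le_trans _ _ (\int[P]_w (c%:E * G w))).
  apply: (@ge0_le_integral _ _ _ P setT measurableT F (fun w => c%:E * G w)).
  - by move=> w _; exact: F0.
  - exact: mF.
  - exact: measurable_funeM.
  - by move=> w _; exact: FG.
rewrite (@ge0_integralZl _ _ _ P setT measurableT G mG c%:E); last 2 first.
- by move=> w _; exact: G0.
- by rewrite lee_fin.
apply: lee_wpmul2l; first by rewrite lee_fin.
exact: hatE_ub.
Qed.

Lemma cvg0_le2 (a b c : nat -> \bar R) : (forall n, 0 <= a n <= b n + c n) ->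
  b @ \oo --> 0 -> c @ \oo --> 0 -> a @ \oo --> 0.
Proof.
move=> h hb hc.
apply: (@squeeze_cvge _ _ _ _ (cst 0) _ (fun n => b n + c n)).
  by apply: nearW.
  exact: cvg_cst.
by rewrite -(adde0 0); apply: cvgeD.
Qed.

Lemma cvg0_le1 (a b : nat -> \bar R) (c : R) : (forall n, 0 <= a n <= c%:E * b n) ->
  b @ \oo --> 0 -> a @ \oo --> 0.
Proof.
move=> h hb.
apply: (@squeeze_cvge _ _ _ _ (cst 0) _ (fun n => c%:E * b n)).
  by apply: nearW.
  exact: cvg_cst.
by rewrite -(mule0 c%:E); apply: cvgeZl.
Qed.
Local Close Scope ereal_scope.

Definition pl n1 n2 (z : 'M[R]_(n1 + n2, d)) : 'M[R]_(n1, d) := \matrix_(a, b) z (lshift n2 a) b.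
Definition pr n1 n2 (z : 'M[R]_(n1 + n2, d)) : 'M[R]_(n2, d) := \matrix_(a, b) z (rshift n1 a) b.

Lemma l1_pl n1 n2 (z z' : 'M[R]_(n1 + n2, d)) : l1 (pl z - pl z') <= l1 (z - z').
Proof.
rewrite /l1 big_split_ord /=.
rewrite (eq_bigr (fun a => \sum_(b < d) `|(z - z') (lshift n2 a) b|)); last first.
  by move=> a _; apply: eq_bigr => b _; rewrite !mxE.
by rewrite lerDl; apply: sumr_ge0 => k _; apply: sumr_ge0.
Qed.

Lemma l1_pr n1 n2 (z z' : 'M[R]_(n1 + n2, d)) : l1 (pr z - pr z') <= l1 (z - z').
Proof.
rewrite /l1 big_split_ord /=.
rewrite (eq_bigr (fun a => \sum_(b < d) `|(z - z') (rshift n1 a) b|) (P := xpredT) (r := index_enum _)); last first.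
  by move=> a _; apply: eq_bigr => b _; rewrite !mxE.
by rewrite lerDr; apply: sumr_ge0 => k _; apply: sumr_ge0.
Qed.

Definition tsm n1 n2 (ts1 : 'I_n1 -> R) (ts2 : 'I_n2 -> R) (k : 'I_(n1 + n2)) : R :=
  match fintype.split k with inl a => ts1 a | inr b => ts2 b end.

Lemma cylv_pl n1 n2 ts1 ts2 (w : Om) : pl (cylv (@tsm n1 n2 ts1 ts2) w) = cylv ts1 w.
Proof.
apply/matrixP => a b; rewrite !mxE /tsm.
by have -> : fintype.split (lshift n2 a) = inl a := unsplitK (inl a).
Qed.

Lemma cylv_pr n1 n2 ts1 ts2 (w : Om) : pr (cylv (@tsm n1 n2 ts1 ts2) w) = cylv ts2 w.
Proof.
apply/matrixP => a b; rewrite !mxE /tsm.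
by have -> : fintype.split (rshift n1 a) = inr a := unsplitK (inr a).
Qed.

Lemma bLip_abs m n (phi : 'M[R]_(m, n) -> R) : bLip phi ->
  exists M C, (forall x, `|phi x| <= M) /\ (forall x y, `|phi x - phi y| <= C * l1 (x - y)) /\ (0 <= C)%R.
Proof.
move=> [[M hM] [C hC]]; exists M, `|C|; split => //; split => // x y.
exact: (le_trans (hC x y) (ler_wpM2r (l1_ge0 _) (ler_norm C))).
Qed.

Lemma cylB_op (op : R -> R -> R)
  (hop : forall a b c e, `|op a b - op c e| <= `|a - c| + `|b - e|)
  (x y : Om -> R) : cylB x -> cylB y -> cylB (fun w => op (x w) (y w)).
Proof.
move=> [n1 [ts1 [phi1 [ts10 [hb1 ->]]]]] [n2 [ts2 [phi2 [ts20 [hb2 ->]]]]].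
have [M1 [C1 [hM1 [hC1 C10]]]] := bLip_abs hb1.
have [M2 [C2 [hM2 [hC2 C20]]]] := bLip_abs hb2.
exists (n1 + n2)%N, (tsm ts1 ts2), (fun z => op (phi1 (pl z)) (phi2 (pr z))).
split; first by move=> k; rewrite /tsm; case: (fintype.split k) => a; [exact: ts10 | exact: ts20].
split; last by apply/funext => w /=; rewrite cylv_pl cylv_pr.
split.
  exists (M1 + M2 + `|op 0 0|) => z.
  have := hop (phi1 (pl z)) (phi2 (pr z)) 0 0; rewrite !subr0 => h.
  have h1 := hM1 (pl z); have h2 := hM2 (pr z).
  have h3 := ler_normD (op (phi1 (pl z)) (phi2 (pr z)) - op 0 0) (op 0 0).
  rewrite subrK in h3; lra.
exists (C1 + C2) => z z'.
apply: le_trans (hop _ _ _ _) _.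
rewrite mulrDl; apply: lerD.
  by apply: le_trans (hC1 _ _) _; apply: ler_wpM2l => //; exact: l1_pl.
by apply: le_trans (hC2 _ _) _; apply: ler_wpM2l => //; exact: l1_pr.
Qed.

Lemma cylB_comp (v : R -> R) (K : R) (x : Om -> R) : 0 <= K ->
  (forall a b, `|v a - v b| <= K * `|a - b|) -> cylB x -> cylB (fun w => v (x w)).
Proof.
move=> K0 hv [n [ts [phi [ts0 [hb ->]]]]].
have [M [C [hM [hC C0]]]] := bLip_abs hb.
exists n, ts, (fun z => v (phi z)); split => //; split => //; split.
  exists (K * M + `|v 0|) => z.
  have := hv (phi z) 0; rewrite subr0 => h.
  have h1 : K * `|phi z| <= K * M by apply: ler_wpM2l.
  have h3 := ler_normD (v (phi z) - v 0) (v 0).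
  rewrite subrK in h3; lra.
exists (K * C) => z z'.
apply: le_trans (hv _ _) _; rewrite -mulrA; apply: ler_wpM2l => //.
Qed.

Lemma cylB_cst (c : R) : cylB (fun _ : Om => c).
Proof.
exists 0%N, (fun _ => 0), (fun _ => c); split => //; split => //; split.
  by exists `|c|.
by exists 0 => z z'; rewrite subrr normr0 mul0r.
Qed.

Lemma cylB_upto_cylB t (x : Om -> R) : cylB_upto t x -> cylB x.
Proof.
move=> [n [ts [phi [ts0 [hb ->]]]]]; exists n, ts, phi; split => //.
by move=> k; case/andP: (ts0 k).
Qed.

Lemma L1G_t_L1G t X : L1G_t PP t X -> L1G PP X.
Proof.
move=> [mX [xn [cx hx]]]; split => //; exists xn; split => // n.
exact: cylB_upto_cylB (cx n).
Qed.

Hypothesis PP0 : PP !=set0.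

Lemma mabs (a b : Om -> R) : measurable_fun setT a -> measurable_fun setT b ->
  measurable_fun setT (fun w => `|(a w)%:E - (b w)%:E|%E).
Proof.
move=> ma mb.
rewrite (_ : (fun w => _) = EFin \o (fun w => `|a w - b w|)); last first.
  by apply/funext => w.
apply/measurable_EFinP; apply: measurableT_comp; first exact: normr_measurable.
exact: measurable_funB.
Qed.

Lemma hatE0 : hatE PP (fun _ => 0%E) = 0%E.
Proof.
apply/le_anti/andP; split; last by apply: hatE_ge0.
by apply: ge_ereal_sup => _ [P _ <-]; rewrite integral0.
Qed.

Lemma L1G_cst (c : R) : L1G PP (fun _ => c%:E).
Proof.
split; first exact: measurable_cst.
exists (fun _ _ => c); split => [n|]; first exact: cylB_cst.
rewrite (_ : (fun n => _) = fun _ => 0%E); first exact: cvg_cst.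
by apply/funext => n; rewrite -EFinB subrr /= normr0 hatE0.
Qed.

Lemma L1G_op (op : R -> R -> R)
  (hop : forall a b c e, `|op a b - op c e| <= `|a - c| + `|b - e|)
  (hmop : forall f g : Om -> R, measurable_fun setT f -> measurable_fun setT g ->
     measurable_fun setT (fun w => op (f w) (g w)))
  (f g : Om -> R) :
  L1G PP (fun w => (f w)%:E) -> L1G PP (fun w => (g w)%:E) ->
  L1G PP (fun w => (op (f w) (g w))%:E).
Proof.
move=> [mf [xn [cx hx]]] [mg [yn [cy hy]]].
have mf' : measurable_fun setT f by apply/measurable_EFinP.
have mg' : measurable_fun setT g by apply/measurable_EFinP.
have mx n : measurable_fun setT (xn n) by apply: cylB_meas.
have my n : measurable_fun setT (yn n) by apply: cylB_meas.
split; first by apply/measurable_EFinP; exact: hmop.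
exists (fun n w => op (xn n w) (yn n w)); split; first by move=> n; apply: cylB_op.
apply: (cvg0_le2 _ hx hy) => n; apply/andP; split; first by apply: hatE_ge0 => // w.
apply: hatE_le2.
- by apply: mabs; apply: hmop.
- exact: mabs.
- exact: mabs.
- by move=> w.
- by move=> w.
- by move=> w.
- by move=> w; rewrite -!EFinB /= -EFinD lee_fin; exact: hop.
Qed.

Lemma L1G_clamp (c : R) (X : Om -> \bar R) : 0 <= c -> L1G PP X ->
  L1G PP (fun w => (c * clampE (X w))%:E).
Proof.
move=> c0 [mX [xn [cx hx]]].
have mx n : measurable_fun setT (xn n) by apply: cylB_meas.
have mc : measurable_fun setT (fun w => (c * clampE (X w))%:E).
  rewrite (_ : (fun w => _) = fun w => (c%:E * @Order.min _ (\bar R) (@Order.max _ (\bar R) (X w) 0%E) 1%E)%E).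
    apply: measurable_funeM; apply: measurable_mine; last exact: measurable_cst.
    by apply: measurable_maxe => //; exact: measurable_cst.
  by apply/funext => w; rewrite EFinM clampEE.
split => //.
exists (fun n w => c * clampR (xn n w)); split.
  move=> n; apply: (@cylB_comp (fun r => c * clampR r) c) => // a b.
  by rewrite -mulrBr normrM (ger0_norm c0); apply: ler_wpM2l => //; exact: clampR_lip.
apply: (cvg0_le1 (c := c) _ hx) => n; apply/andP; split; first by apply: hatE_ge0 => // w.
apply: hatE_le1 => //.
- apply: mabs; first by apply/measurable_EFinP.
  apply: measurable_funM; first exact: measurable_cst.
  rewrite /clampR; apply: measurable_minr; last exact: measurable_cst.
  by apply: measurable_maxr => //; exact: measurable_cst.
- apply: measurableT_comp; first exact: abse_measurable.
  by apply: emeasurable_funB => //; apply/measurable_EFinP.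
- by move=> w; exact: clamp_bound.
Qed.

Lemma add_lip (a b c e : R) : `|a + b - (c + e)| <= `|a - c| + `|b - e|.
Proof. by rewrite opprD addrACA; exact: ler_normD. Qed.

Lemma L1G_sum n (F : 'I_n -> Om -> R) : (forall k, L1G PP (fun w => (F k w)%:E)) ->
  L1G PP (fun w => (\sum_(k < n) F k w)%:E).
Proof.
elim: n F => [|n IH] F hF.
  rewrite (_ : (fun w => _) = fun _ => 0%:E); first exact: L1G_cst.
  by apply/funext => w; rewrite big_ord0.
rewrite (_ : (fun w => _) = fun w => ((\sum_(k < n) F (widen_ord (leqnSn n) k) w) + F ord_max w)%:E); last first.
  by apply/funext => w; rewrite big_ord_recr.
apply: (@L1G_op +%R add_lip) => //.
- by move=> f g mf mg; exact: measurable_funD.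
- by apply: IH => k; exact: hF.
Qed.

Lemma L1G_bigmin n (x0 : Om -> R) (F : 'I_n -> Om -> R) : L1G PP (fun w => (x0 w)%:E) ->
  (forall k, L1G PP (fun w => (F k w)%:E)) ->
  L1G PP (fun w => (\big[Num.min/x0 w]_(k < n) F k w)%:E).
Proof.
elim: n F => [|n IH] F h0 hF.
  by rewrite (_ : (fun w => _) = fun w => (x0 w)%:E) //; apply/funext => w; rewrite big_ord0.
rewrite (_ : (fun w => _) = fun w => (Num.min (F ord0 w) (\big[Num.min/x0 w]_(k < n) F (lift ord0 k) w))%:E); last first.
  by apply/funext => w; rewrite big_ord_recl.
apply: (@L1G_op Num.min (@min_lip R)) => //.
- by move=> f g mf mg; exact: measurable_minr.
- by apply: IH => // k; exact: hF.
Qed.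

Lemma Ft_sub t : Ft t `<=` @measurable _ Om.
Proof.
apply: smallest_sub; first exact: sigma_algebra_measurable.
move=> _ [s [i [A [s0 [st [mA ->]]]]]].
by apply: sub_gen_smallest; exists s, i, A.
Qed.

Lemma tau_meas (tau : Om -> R) : star_stopping_time PP tau -> measurable_fun setT tau.
Proof.
case=> tau0 hI.
apply: (measurability (@RGenCInfty.G R)) => [|/= _ [_] [x] -> <-].
  exact: RGenCInfty.measurableE.
rewrite setTI.
have -> : tau @^-1` `[x, +oo[%classic = [set w | x <= tau w].
  by apply/seteqP; split => w /=; rewrite in_itv /= andbT.
case: (lerP 0 x) => x0; last first.
  rewrite (_ : [set w | x <= tau w] = setT) //; apply/seteqP; split => // w _ /=.
  exact: le_trans (ltW x0) (tau0 w).
have [[hm _] _] := hI x x0.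
have mE : measurable [set (1%:E : \bar R)].
  rewrite (_ : [set _] = EFin @` [set (1 : R)]); last first.
    by apply/seteqP; split => [_ ->|_ [_ -> <-]] //; exists 1.
  by apply: measurable_image_EFin; exact: measurable_set1.
apply: Ft_sub; rewrite (_ : [set w | x <= tau w] = (fun w => ((if x <= tau w then 1 else 0)%:E : \bar R)) @^-1` [set 1%:E]).
  exact: hm.
apply/seteqP; split => w /=.
  by move=> ->.
by case: ifP => // _ /eqP; rewrite eqe eq_sym oner_eq0.
Qed.

Lemma cap_ge0 A : measurable A -> (0 <= cap PP A)%E.
Proof.
move=> mA; case: PP0 => P PPP.
by apply: le_ereal_sup_tmp; exists (P A); [exists P | exact: measure_ge0].
Qed.

Lemma cap_bigcup (F : nat -> set Om) : (forall n, measurable (F n)) ->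
  (forall n, cap PP (F n) = 0%E) -> cap PP (\bigcup_n F n) = 0%E.
Proof.
move=> mF cF; apply/le_anti/andP; split; last by apply: cap_ge0; exact: bigcupT_measurable.
apply: ge_ereal_sup => _ [P PPP <-].
have hn n : (P : set Om -> \bar R) (F n) = 0%E.
  apply/le_anti/andP; split; last exact: measure_ge0.
  by rewrite -(cF n); apply: ereal_sup_ubound; exists P.
have [B [mB PB sB]] := negligible_bigcup (mu := P) (fun n => ex_intro _ (F n) (And3 (mF n) (hn n) (@subset_refl _ (F n)))).
by rewrite -PB; apply: le_measure => //; rewrite inE //; exact: bigcupT_measurable.
Qed.

Lemma bL1_min (tau : Om -> R) (T : R) : 0 <= T -> star_stopping_time PP tau ->
  bL1 PP (fun w => (Num.min (tau w) T)%:E).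
Proof.
move=> T0 htau.
have m1 : measurable_fun setT (fun w => (Num.min (tau w) T)%:E).
  apply/measurable_EFinP; apply: measurable_minr; first exact: tau_meas.
  exact: measurable_cst.
split => //.
apply: (@le_lt_trans _ _ T%:E); last exact: ltry.
apply: ge_ereal_sup => _ [P PPP <-].
apply: le_trans (_ : \int[P]_w (cst T%:E w) <= _)%E.
  apply: (@ge0_le_integral _ _ _ P setT measurableT).
  - by move=> w _; exact: abse_ge0.
  - by apply: measurableT_comp => //; exact: abse_measurable.
  - exact: measurable_cst.
  - move=> w _ /=; rewrite lee_fin ger0_norm; first by rewrite ge_min lexx orbT.
    by rewrite le_min T0 (proj1 htau w).
rewrite integral_cst // -[leRHS]mule1; apply: lee_wpmul2l; first by rewrite lee_fin.
exact: probability_le1.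
Qed.

Lemma main1 (tau : Om -> R) (htau : star_stopping_time PP tau) (T : R) : 0 < T ->
  L1Gstar PP (fun w => (Num.min (tau w) T)%:E).
Proof.
move=> T0.
have bl := bL1_min (ltW T0) htau.
case: htau => tau0 hI.
have hY : forall t : R, exists YN : (nat -> Om -> \bar R) * set Om,
   0 <= t -> (forall n, L1G_t PP t (YN.1 n)) /\ measurable YN.2 /\ cap PP YN.2 = 0%E /\
    forall w, ~ YN.2 w -> decr_to YN.1 (fun w => (if t <= tau w then 1 else 0)%:E) w.
  move=> t; case: (pselect (0 <= t)) => t0; last by exists ((fun _ _ => 0%E), set0).
  have [_ [Yn [hYn [N [mN [cN hN]]]]]] := hI t t0.
  by exists (Yn, N).
have [YN hYN] := choice hY.
pose c (n : nat) := T / n.+1%:R.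
have c0 n : 0 < c n by rewrite divr_gt0.
pose tg (n k : nat) := k%:R * c n.
have tg0 n k : 0 <= tg n k by rewrite mulr_ge0 // ltW.
pose Z n m w := \sum_(k < n.+1) c n * clampE ((YN (tg n k)).1 m w).
pose W N w := \big[Num.min/Z 0%N N w]_(j < N) Z j.+1 N w.
split => //.
exists (fun N w => (W N w)%:E); split.
  move=> N; apply: L1G_bigmin => [|j]; apply: L1G_sum => k; apply: L1G_clamp; rewrite ?ltW //;
    exact: L1G_t_L1G ((hYN _ (tg0 _ _)).1 N).
pose Nb := \bigcup_n \bigcup_k (YN (tg n k)).2.
have mN n k : measurable (YN (tg n k)).2 by have [_ [? _]] := (hYN _) (tg0 n k).
exists Nb; split; first by apply: bigcupT_measurable => n; exact: bigcupT_measurable.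
split.
  apply: cap_bigcup => [n|n]; first exact: bigcupT_measurable.
  apply: cap_bigcup => // k.
  by have [_ [_ [? _]]] := (hYN _) (tg0 n k).
move=> w Nw.
have good n k : decr_to (YN (tg n k)).1 (fun w => (if tg n k <= tau w then 1 else 0)%:E) w.
  have [_ [_ [_ h]]] := (hYN _) (tg0 n k); apply: h => Nk; apply: Nw.
  by exists n => //; exists k.
have cs n k := @clamp_seq R (fun m => (YN (tg n k)).1 m w) (if tg n k <= tau w then 1 else 0)
  ltac:(by case: ifP; [right|left]) (good n k).1 (good n k).2.
pose S n := \sum_(k < n.+1) c n * (if tg n k <= tau w then 1 else 0).
have cn n : n.+1%:R * c n = T by rewrite mulrC divfK.
apply: (@core R (Num.min (tau w) T) S (fun n m => Z n m w)).
- move=> n m; apply: ler_sum => k _; apply: ler_wpM2l; first exact: ltW.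
  by case: (cs n k).
- move=> n m; apply: ler_sum => k _; apply: ler_wpM2l; first exact: ltW.
  by case: (cs n k).
- move=> n; rewrite /S -(big_mkord xpredT (fun k => c n * (if tg n k <= tau w then 1 else 0))).
  rewrite -[X in Num.min _ X](cn n); apply: S_lb => //; exact: ltW.
- move=> e e0; exists (Num.truncn (T / e)).
  set n := Num.truncn (T / e).
  have hn := truncnS_gt (T / e).
  rewrite /S -(big_mkord xpredT (fun k => c n * (if tg n k <= tau w then 1 else 0))).
  apply: le_trans (S_ub n (tau0 w) (ltW (c0 n))) _.
  apply: lerD.
    apply: le_min2 => //; rewrite -[leRHS](cn n).
    by rewrite ler_wpM2r ?ler_nat // ltW.
  rewrite /c ler_pdivrMr // mulrC -ler_pdivrMr //; exact: ltW.
- move=> n e e0.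
  have eT : 0 < e / T by rewrite divr_gt0.
  have hk : forall k : 'I_n.+1, \forall m \near \oo,
      clampE ((YN (tg n k)).1 m w) <= (if tg n k <= tau w then 1 else 0) + e / T.
    by move=> k; case: (cs n k) => _ _ h; exact: h.
  have [m0 _ hm0] := filter_forall _ hk.
  exists m0 => m hm.
  apply: (@le_trans _ _ (\sum_(k < n.+1) (c n * (if tg n k <= tau w then 1 else 0) + c n * (e / T)))).
    apply: ler_sum => k _; rewrite -mulrDr; apply: ler_wpM2l; first exact: ltW.
    exact: hm0.
  rewrite big_split /= lerD2l sumr_const card_ord -mulr_natr /c.
by rewrite mulrAC divfK ?pnatr_eq0 // mulrC divfK ?gt_eqF.
Qed.
End S.

Lemma PP_ne (R : realType) (d : nat) (PP : set (probability (Omega R d) R)) E :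
  represents PP E -> PP !=set0.
Proof.
move=> hr; have h0 := hr (fun _ => 0) (@cylB_cst R d 0).
apply: contrapT => hP; move: h0.
set S := ereal_sup _ => h0.
have : S = -oo%E.
  by apply/ereal_sup_ninfty => x [P PPP _]; case: hP; exists P.
by rewrite h0.
Qed.

Unset Implicit Arguments.
Set Strict Implicit.

Theorem proposition3p24 (R : realType) (d : nat)
  (G : 'M[R]_d -> R) (E : (Omega R d -> R) -> R)
  (PP : set (probability (Omega R d) R))
  (hG : monotone_sublinear G) (hE : is_G_expectation G E)
  (hPPc : weakly_compact PP) (hPPr : represents PP E)
  (tau : Omega R d -> R) (htau : star_stopping_time PP tau) :
  (forall T : R, 0 < T -> L1Gstar PP (fun w => (Num.min (tau w) T)%:E)) /\
  L1Gstarstar PP (fun w => (tau w)%:E).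
Proof.
have PP0 : PP !=set0 := PP_ne hPPr.
split => [T T0|]; first exact: main1.
split.
  apply/measurable_EFinP.
  exact: (tau_meas htau).
exists (fun n w => (Num.min (tau w) n.+1%:R)%:E); split.
  by move=> n; apply: main1.
exists set0; split; first exact: measurable0.
split.
  apply/le_anti/andP; split; last exact: cap_ge0.
  by apply: ge_ereal_sup => _ [P _ <-]; rewrite measure0.
move=> w _; split.
  by move=> n; rewrite lee_fin le_min2 // ler_nat.
apply: cvg_EFin; first exact: nearW.
apply/cvgrPdist_le => e e0; exists (Num.truncn (tau w)) => // n /= hn.
rewrite min_l; first by rewrite subrr normr0 ltW.
apply: le_trans (ltW (truncnS_gt (tau w))) _.
by rewrite ler_nat.
Qed.
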